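(* Let $M\subset\mathbb{R}^2$ be open with coordinates $(x,u)$, let $M^{(1)}$ be the first-order jet space with coordinates $(x,u,u_x)$, and consider the ODE $u_{xx}=\phi(x,u,u_x)$ with associated vector field $\mathbf{A}=\partial_x+u_x\partial_u+\phi\,\partial_{u_x}$. Let $(\partial_u,\lambda_1)$ and $(\partial_u,\lambda_2)$ be the canonical representatives of two non-equivalent generalized $\mathcal{C}^\infty$-symmetries of this ODE (so $\lambda_1\neq\lambda_2$), put $\mathbf{X}_i=\partial_u+\lambda_i\partial_{u_x}$ ($i=1,2$) and $$\rho=\frac{\mathbf{X}_1(\lambda_2)-\mathbf{X}_2(\lambda_1)}{\lambda_1-\lambda_2}.$$ If $f_1=f_1(x,u,u_x)$ and $f_2=f_2(x,u,u_x)$ are functions such that $$\frac{\mathbf{X}_1(f_2)}{f_2}=\frac{\mathbf{X}_2(f_1)}{f_1}=\rho,$$ then $$[f_1\mathbf{X}_1,\mathbf{A}]=\rho_1 (f_1\mathbf{X}_1),\qquad [f_2\mathbf{X}_2,\mathbf{A}]=\rho_2 (f_2\mathbf{X}_2),\qquad [f_1\mathbf{X}_1,f_2\mathbf{X}_2]=0,$$ where $\rho_i=\lambda_i-\mathbf{A}(f_i)/f_i$ for $i=1,2$.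
   Context: All functions are smooth on $M^{(1)}$ and all statements are local, on an open set where the functions appearing in denominators ($\lambda_1-\lambda_2$, $f_1$, $f_2$) do not vanish. For smooth $\xi,\eta,\lambda$ on $M^{(1)}$ and $\mathbf{v}=\xi\partial_x+\eta\partial_u$, the $\lambda$-prolongation is $\mathbf{v}^{[\lambda,(1)]}=\mathbf{v}+\big((\mathbf{A}+\lambda)(\eta)-(\mathbf{A}+\lambda)(\xi)u_x\big)\partial_{u_x}$. The pair $(\mathbf{v},\lambda)$ is a generalized $\mathcal{C}^\infty$-symmetry (generalized $\lambda$-symmetry) of the ODE if $[\mathbf{v}^{[\lambda,(1)]},\mathbf{A}]=\lambda\,\mathbf{v}^{[\lambda,(1)]}+\mu\mathbf{A}$ with $\mu=-(\mathbf{A}+\lambda)(\xi)$. Two generalized $\mathcal{C}^\infty$-symmetries $(\mathbf{v}_1,\lambda_1)$, $(\mathbf{v}_2,\lambda_2)$ are $\mathbf{A}$-equivalent if $\{\mathbf{A},\mathbf{v}_1^{[\lambda_1,(1)]},\mathbf{v}_2^{[\lambda_2,(1)]}\}$ is linearly dependent over $C^\infty(M^{(1)})$. If $Q=\eta-\xi u_x$ is the characteristic of $\mathbf{v}$, the canonical representative of the equivalence class of $(\mathbf{v},\lambda)$ is the pair $(\partial_u,\lambda+\mathbf{A}(Q)/Q)$; in particular $(\partial_u,\lambda)$ is a generalized $\mathcal{C}^\infty$-symmetry iff $[\partial_u+\lambda\partial_{u_x},\mathbf{A}]=\lambda(\partial_u+\lambda\partial_{u_x})$. *)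

(* Defs.v *)
From Stdlib Require Import Reals.
From Coquelicot Require Import Coquelicot.
Open Scope R_scope.

(* Points of the jet space M^(1) : (x, u, u_x) = ((x,u),p). *)
Definition pt := (R * R * R)%type.
Definition fn := pt -> R.

Definition px (q : pt) : R := fst (fst q).
Definition pu (q : pt) : R := snd (fst q).
Definition pp (q : pt) : R := snd q.

Definition dx (g : fn) : fn := fun q => Derive (fun t => g (t, pu q, pp q)) (px q).
Definition du (g : fn) : fn := fun q => Derive (fun t => g (px q, t, pp q)) (pu q).
Definition dp (g : fn) : fn := fun q => Derive (fun t => g (px q, pu q, t)) (pp q).

Fixpoint Ck (k : nat) (U : pt -> Prop) (g : fn) : Prop :=
  (forall q, U q -> continuous g q) /\
  match k with
  | O => True
  | S k' =>
      (forall q, U q ->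
         ex_derive (fun t => g (t, pu q, pp q)) (px q) /\
         ex_derive (fun t => g (px q, t, pp q)) (pu q) /\
         ex_derive (fun t => g (px q, pu q, t)) (pp q)) /\
      Ck k' U (dx g) /\ Ck k' U (du g) /\ Ck k' U (dp g)
  end.

Definition smooth_on (U : pt -> Prop) (g : fn) : Prop := forall k, Ck k U g.

Record VF := mkVF { cx : fn; cu : fn; cp : fn }.

Definition vapp (V : VF) (g : fn) : fn :=
  fun q => cx V q * dx g q + cu V q * du g q + cp V q * dp g q.

Definition bracket (V W : VF) : VF :=
  mkVF (fun q => vapp V (cx W) q - vapp W (cx V) q)
       (fun q => vapp V (cu W) q - vapp W (cu V) q)
       (fun q => vapp V (cp W) q - vapp W (cp V) q).

Definition vscale (f : fn) (V : VF) : VF :=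
  mkVF (fun q => f q * cx V q) (fun q => f q * cu V q) (fun q => f q * cp V q).

Definition vadd (V W : VF) : VF :=
  mkVF (fun q => cx V q + cx W q) (fun q => cu V q + cu W q)
       (fun q => cp V q + cp W q).

Definition vzero : VF := mkVF (fun _ => 0) (fun _ => 0) (fun _ => 0).

Definition vf_eq_on (U : pt -> Prop) (V W : VF) : Prop :=
  forall q, U q -> cx V q = cx W q /\ cu V q = cu W q /\ cp V q = cp W q.

Definition Avf (phi : fn) : VF := mkVF (fun _ => 1) pp phi.

Definition Aplus (phi lam g : fn) : fn := fun q => vapp (Avf phi) g q + lam q * g q.

Definition lprol (phi xi eta lam : fn) : VF :=
  mkVF xi eta (fun q => Aplus phi lam eta q - Aplus phi lam xi q * pp q).

Definition gen_sym (U : pt -> Prop) (phi xi eta lam : fn) : Prop :=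
  vf_eq_on U (bracket (lprol phi xi eta lam) (Avf phi))
    (vadd (vscale lam (lprol phi xi eta lam))
          (vscale (fun q => - Aplus phi lam xi q) (Avf phi))).

Definition A_equiv (U : pt -> Prop) (phi xi1 eta1 lam1 xi2 eta2 lam2 : fn) : Prop :=
  exists a b c : fn,
    smooth_on U a /\ smooth_on U b /\ smooth_on U c /\
    (exists q, U q /\ (a q <> 0 \/ b q <> 0 \/ c q <> 0)) /\
    vf_eq_on U (vadd (vscale a (Avf phi))
                  (vadd (vscale b (lprol phi xi1 eta1 lam1))
                        (vscale c (lprol phi xi2 eta2 lam2)))) vzero.

Definition fzero : fn := fun _ => 0.
Definition fone : fn := fun _ => 1.

Definition Xvf (lam : fn) : VF := mkVF fzero fone lam.

(* Main.v *)
Require Import Defs.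
From Stdlib Require Import Reals Lra.
From Coquelicot Require Import Coquelicot.
Open Scope R_scope.
From Stdlib Require Import Lra.

Lemma dx_ext g h q : (forall q, g q = h q) -> dx g q = dx h q.
Proof. intros E; unfold dx; apply Derive_ext; intros; apply E. Qed.
Lemma du_ext g h q : (forall q, g q = h q) -> du g q = du h q.
Proof. intros E; unfold du; apply Derive_ext; intros; apply E. Qed.
Lemma dp_ext g h q : (forall q, g q = h q) -> dp g q = dp h q.
Proof. intros E; unfold dp; apply Derive_ext; intros; apply E. Qed.
Lemma dx_c c q : dx (fun _ => c) q = 0.
Proof. unfold dx; apply Derive_const. Qed.
Lemma du_c c q : du (fun _ => c) q = 0.
Proof. unfold du; apply Derive_const. Qed.
Lemma dp_c c q : dp (fun _ => c) q = 0.
Proof. unfold dp; apply Derive_const. Qed.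
Lemma dx_pp q : dx pp q = 0.
Proof. unfold dx, pp; simpl; apply Derive_const. Qed.
Lemma du_pp q : du pp q = 0.
Proof. unfold du, pp; simpl; apply Derive_const. Qed.
Lemma dp_pp q : dp pp q = 1.
Proof. unfold dp, pp; simpl; apply Derive_id. Qed.

Lemma dx_mul g h q : ex_derive (fun t => g (t, pu q, pp q)) (px q) ->
  ex_derive (fun t => h (t, pu q, pp q)) (px q) ->
  dx (fun q => g q * h q) q = dx g q * h q + g q * dx h q.
Proof. destruct q as [[a b] c]; unfold dx, px, pu, pp; simpl; intros.
  rewrite Derive_mult; auto; lra. Qed.
Lemma du_mul g h q : ex_derive (fun t => g (px q, t, pp q)) (pu q) ->
  ex_derive (fun t => h (px q, t, pp q)) (pu q) ->
  du (fun q => g q * h q) q = du g q * h q + g q * du h q.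
Proof. destruct q as [[a b] c]; unfold du, px, pu, pp; simpl; intros.
  rewrite Derive_mult; auto; lra. Qed.
Lemma dp_mul g h q : ex_derive (fun t => g (px q, pu q, t)) (pp q) ->
  ex_derive (fun t => h (px q, pu q, t)) (pp q) ->
  dp (fun q => g q * h q) q = dp g q * h q + g q * dp h q.
Proof. destruct q as [[a b] c]; unfold dp, px, pu, pp; simpl; intros.
  rewrite Derive_mult; auto; lra. Qed.

Lemma sm_ex U g q : smooth_on U g -> U q ->
  ex_derive (fun t => g (t, pu q, pp q)) (px q) /\
  ex_derive (fun t => g (px q, t, pp q)) (pu q) /\
  ex_derive (fun t => g (px q, pu q, t)) (pp q).
Proof. intros S Uq. destruct (S 1%nat) as [_ [H _]]. auto. Qed.

Lemma cp_lprol phi lam q : cp (lprol phi fzero fone lam) q = lam q.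
Proof. unfold lprol, Aplus, vapp, fone, fzero; cbn [cp cx cu Avf].
  rewrite !dx_c, !du_c, !dp_c; ring. Qed.

Lemma gs_eq U phi lam q : gen_sym U phi fzero fone lam -> U q ->
  vapp (Xvf lam) phi q - vapp (Avf phi) lam q = lam q * lam q.
Proof. intros G Uq. destruct (G q Uq) as [_ [_ H]].
  cbn [bracket vadd vscale cx cu cp Avf] in H.
  rewrite cp_lprol in H.
  assert (E1: vapp (lprol phi fzero fone lam) phi q = vapp (Xvf lam) phi q).
  { unfold vapp. rewrite cp_lprol. reflexivity. }
  assert (E2: vapp (Avf phi) (cp (lprol phi fzero fone lam)) q = vapp (Avf phi) lam q).
  { unfold vapp. rewrite (dx_ext _ lam), (du_ext _ lam), (dp_ext _ lam); auto;
    intros; apply cp_lprol. }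
  rewrite E1, E2 in H. rewrite H. unfold Aplus, vapp, fzero; cbn.
  rewrite dx_c, du_c, dp_c; ring. Qed.

Lemma z0 f q : forall k : (pt -> R) -> pt -> R, (k = dx \/ k = du \/ k = dp) ->
   k (fun q => f q * fzero q) q = 0.
Proof. intros k [->|[->| ->]].
 rewrite (dx_ext _ (fun _ => 0)); [apply dx_c| intros; unfold fzero; ring].
 rewrite (du_ext _ (fun _ => 0)); [apply du_c| intros; unfold fzero; ring].
 rewrite (dp_ext _ (fun _ => 0)); [apply dp_c| intros; unfold fzero; ring].
Qed.
Lemma o1 f q : forall k : (pt -> R) -> pt -> R, (k = dx \/ k = du \/ k = dp) ->
   k (fun q => f q * fone q) q = k f q.
Proof. intros k [->|[->| ->]].
 apply dx_ext; intros; unfold fone; ring.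
 apply du_ext; intros; unfold fone; ring.
 apply dp_ext; intros; unfold fone; ring.
Qed.

Ltac nrm := rewrite ?(z0 _ _ dx), ?(z0 _ _ du), ?(z0 _ _ dp), ?(o1 _ _ dx), ?(o1 _ _ du), ?(o1 _ _ dp),
  ?dx_c, ?du_c, ?dp_c, ?dx_pp, ?du_pp, ?dp_pp by auto.

Theorem lemma1 (U : pt -> Prop) (phi lam1 lam2 f1 f2 : fn) :
  open U ->
  smooth_on U phi -> smooth_on U lam1 -> smooth_on U lam2 ->
  smooth_on U f1 -> smooth_on U f2 ->
  gen_sym U phi fzero fone lam1 ->
  gen_sym U phi fzero fone lam2 ->
  ~ A_equiv U phi fzero fone lam1 fzero fone lam2 ->
  (forall q, U q -> lam1 q - lam2 q <> 0 /\ f1 q <> 0 /\ f2 q <> 0) ->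
  let rho : fn := fun q =>
    (vapp (Xvf lam1) lam2 q - vapp (Xvf lam2) lam1 q) / (lam1 q - lam2 q) in
  (forall q, U q -> vapp (Xvf lam1) f2 q / f2 q = rho q) ->
  (forall q, U q -> vapp (Xvf lam2) f1 q / f1 q = rho q) ->
  let rho1 : fn := fun q => lam1 q - vapp (Avf phi) f1 q / f1 q in
  let rho2 : fn := fun q => lam2 q - vapp (Avf phi) f2 q / f2 q in
  vf_eq_on U (bracket (vscale f1 (Xvf lam1)) (Avf phi))
             (vscale rho1 (vscale f1 (Xvf lam1))) /\
  vf_eq_on U (bracket (vscale f2 (Xvf lam2)) (Avf phi))
             (vscale rho2 (vscale f2 (Xvf lam2))) /\
  vf_eq_on U (bracket (vscale f1 (Xvf lam1)) (vscale f2 (Xvf lam2))) vzero.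
Proof.
  intros _ _ Sl1 Sl2 Sf1 Sf2 G1 G2 _ Hne rho H2 H1 rho1 rho2.
  split; [|split]; intros q Uq;
  destruct (Hne q Uq) as [d12 [nf1 nf2]];
  pose proof (gs_eq _ _ _ q G1 Uq) as E1;
  pose proof (gs_eq _ _ _ q G2 Uq) as E2;
  specialize (H1 q Uq); specialize (H2 q Uq);
  destruct (sm_ex _ _ q Sl1 Uq) as [a1 [b1 c1]];
  destruct (sm_ex _ _ q Sl2 Uq) as [a2 [b2 c2]];
  destruct (sm_ex _ _ q Sf1 Uq) as [a3 [b3 c3]];
  destruct (sm_ex _ _ q Sf2 Uq) as [a4 [b4 c4]];
  unfold rho1, rho2, rho in *; clear rho1 rho2 rho;
  cbn [bracket vadd vscale cx cu cp Avf Xvf vzero];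
  unfold vapp in *; cbn [bracket vadd vscale cx cu cp Avf Xvf vzero] in *;
  nrm;
  rewrite ?dx_mul, ?du_mul, ?dp_mul by auto;
  unfold fzero, fone in *.
  all: split; [|split]; try (field; auto).
  - assert (D: du phi q = lam1 q * lam1 q - (f1 q * 0 * dx phi q + lam1 q * dp phi q - (1 * dx lam1 q + pp q * du lam1 q + phi q * dp lam1 q))) by lra.
    rewrite D; field; auto.
  - assert (D: du phi q = lam2 q * lam2 q - (f1 q * 0 * dx phi q + lam2 q * dp phi q - (1 * dx lam2 q + pp q * du lam2 q + phi q * dp lam2 q))) by lra.
    rewrite D; field; auto.
  - assert (D1: du f1 q = (0 * dx f1 q + 1 * du f1 q + lam2 q * dp f1 q) / f1 q * f1 q - lam2 q * dp f1 q) by (field; auto).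
    assert (D2: du f2 q = (0 * dx f2 q + 1 * du f2 q + lam1 q * dp f2 q) / f2 q * f2 q - lam1 q * dp f2 q) by (field; auto).
    rewrite D1, D2, H1, H2. field; auto.
  - assert (D1: du f1 q = (0 * dx f1 q + 1 * du f1 q + lam2 q * dp f1 q) / f1 q * f1 q - lam2 q * dp f1 q) by (field; auto).
    assert (D2: du f2 q = (0 * dx f2 q + 1 * du f2 q + lam1 q * dp f2 q) / f2 q * f2 q - lam1 q * dp f2 q) by (field; auto).
    rewrite D1, D2, H1, H2. field; auto.
Qed.
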